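(* Let $s\ge2$ and let $\mathcal{C}$ be an $[n,k,d]_q$ linear code with multiple $(r_i,\delta_i)_{i\in[s]}$ localities with respect to a partition $\mathcal{T}_1,\dots,\mathcal{T}_s$ of $[n]$, $n_i=|\mathcal{T}_i|$, $r_1\le\dots\le r_s$, $\delta_1\ge\dots\ge\delta_s\ge2$. Let $\Delta_0=0$ and $\Delta_j=\sum_{i=1}^{j}\lceil n_i/(r_i+\delta_i-1)\rceil(\delta_i-1)$ for $j=1,\dots,s-1$. Suppose $\sum_{i=1}^{s-1}r_i\lceil n_i/(r_i+\delta_i-1)\rceil\le k-1$ and, for each $j=1,\dots,s-1$, $$r_j\left\lceil\frac{\Delta_j-\Delta_{j-1}-1}{\delta_j-1}\right\rceil+(\Delta_j-\Delta_{j-1}-1)<n_j.$$ Then: (i) for $j=1,\dots,s-1$ and $\Delta_{j-1}\le x\le\Delta_j$, $$\Phi(x)\le\sum_{i=1}^{j-1}r_i\left\lceil\frac{n_i}{r_i+\delta_i-1}\right\rceil+r_j\left\lceil\frac{x-\Delta_{j-1}}{\delta_j-1}\right\rceil+x;$$ (ii) for $\Delta_{s-1}\le x\le\rho+1$, $$\Phi(x)\le\sum_{i=1}^{s-1}r_i\left\lceil\frac{n_i}{r_i+\delta_i-1}\right\rceil+r_s\left\lceil\frac{x-\Delta_{s-1}}{\delta_s-1}\right\rceil+x,$$ where $\rho=\max\{x:\Phi(x)-x<k\}$.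
   Context: $[n]=\{1,\dots,n\}$. For an $[n,k,d]_q$ linear code $\mathcal{C}$ with generator matrix columns $\vec g_1,\dots,\vec g_n$, a regenerating set of coordinate $i$ is a subset $R\subseteq[n]$ with $i\in R$ such that $\vec g_i$ is an $\mathbb{F}_q$-linear combination of $\{\vec g_j\}_{j\in R\setminus\{i\}}$; regenerating sets are taken to be minimal (no proper subset of $R\setminus\{i\}$ suffices). $\mathcal{R}_i$ is the collection of regenerating sets of coordinate $i$. A sequence $R_1,\dots,R_m$ with $R_t\in\mathcal{R}_{l_t}$, $l_t\in[n]$, has a nontrivial union if $l_j\notin\bigcup_{t<j}R_t$ for all $j$. $\Phi(0)=0$ and for $x\ge1$, $\Phi(x)=\min\{|\bigcup_{t=1}^xR_t|: R_t\in\mathcal{R}_{l_t},\ R_1,\dots,R_x \text{ have a nontrivial union}\}$. Multiple $(r_i,\delta_i)_{i\in[s]}$ localities: $\mathcal{T}_1,\dots,\mathcal{T}_s$ is a partition of $[n]$, $r_1\le\dots\le r_s$ and $\delta_1\ge\dots\ge\delta_s\ge2$ are integers, and for each $i\in[s]$ and each $\iota\in\mathcal{T}_i$ there is $S_\iota\subseteq\mathcal{T}_i$ with $\iota\in S_\iota$, $\delta_i\le|S_\iota|\le r_i+\delta_i-1$, such that for every $E\subseteq S_\iota$ with $|E|=\delta_i-1$ and every $j\in E$, $(S_\iota\setminus E)\cup\{j\}\in\mathcal{R}_j$. *)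

(* Defs.v *)
From HB Require Import structures.
From mathcomp Require Import all_boot all_order all_algebra.
Set Implicit Arguments. Unset Strict Implicit. Unset Printing Implicit Defensive.
Import GRing.Theory.
Local Open Scope ring_scope.

(* Linear code of length n, dimension k over a finite field F, given by a
   generator matrix G : 'M[F]_(k, n) of rank k; columns g_j = col j G. *)

Definition in_span (F : finFieldType) (k n : nat) (G : 'M[F]_(k, n))
    (S : {set 'I_n}) (i : 'I_n) : bool :=
  [exists c : {ffun 'I_n -> F}, col i G == \sum_(j in S) c j *: col j G].

Definition regen (F : finFieldType) (k n : nat) (G : 'M[F]_(k, n))
    (i : 'I_n) (R : {set 'I_n}) : bool :=
  [&& i \in R, in_span G (R :\ i) i &
      [forall S : {set 'I_n}, (S \proper (R :\ i)) ==> ~~ in_span G S i]].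

Definition nontriv_union (F : finFieldType) (k n : nat) (G : 'M[F]_(k, n))
    (x : nat) (t : x.-tuple ('I_n * {set 'I_n})) : bool :=
  [forall j : 'I_x, regen G (tnth t j).1 (tnth t j).2 &&
     ((tnth t j).1 \notin \bigcup_(u < x | (u < j)%N) (tnth t u).2)].

Definition seq_union (n x : nat) (t : x.-tuple ('I_n * {set 'I_n})) :
  {set 'I_n} := \bigcup_(u < x) (tnth t u).2.

Definition Phi_defined (F : finFieldType) (k n : nat) (G : 'M[F]_(k, n))
    (x : nat) : bool :=
  [exists t : x.-tuple ('I_n * {set 'I_n}), nontriv_union G t].

(* Phi(x) = min |union|; the default n is never below an actual value,
   so when Phi_defined holds this is the true minimum. *)
Definition Phi (F : finFieldType) (k n : nat) (G : 'M[F]_(k, n))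
    (x : nat) : nat :=
  \big[minn/n]_(t : x.-tuple ('I_n * {set 'I_n}) | nontriv_union G t)
     #|seq_union t|.

(* rho = max { x : Phi(x) - x < k }; any x with Phi defined satisfies x <= n. *)
Definition rho (F : finFieldType) (k n : nat) (G : 'M[F]_(k, n)) : nat :=
  \max_(x < n.+1 | Phi_defined G x && (Phi G x - x < k)%N) x.

Definition cdiv (a b : nat) : nat := ((a + b.-1) %/ b)%N.

(* T_0,...,T_{s-1} (0-based) is a partition of [n] into nonempty blocks *)
Definition is_partition (n s : nat) (T : nat -> {set 'I_n}) : Prop :=
  [/\ forall j : 'I_n, exists2 i, (i < s)%N & j \in T i,
      forall i i', (i < s)%N -> (i' < s)%N -> i <> i' -> [disjoint T i & T i'] &
      forall i, (i < s)%N -> T i != set0].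

Definition multi_locality (F : finFieldType) (k n : nat) (G : 'M[F]_(k, n))
    (s : nat) (T : nat -> {set 'I_n}) (r delta : nat -> nat) : Prop :=
  forall i, (i < s)%N -> forall iota, iota \in T i ->
    exists S : {set 'I_n},
      [/\ S \subset T i, iota \in S, (delta i <= #|S|)%N,
          (#|S| <= r i + delta i - 1)%N &
          forall E : {set 'I_n}, E \subset S -> #|E| = (delta i - 1)%N ->
            forall j, j \in E -> regen G j ((S :\: E) :|: [set j])].

Definition nblk (n : nat) (T : nat -> {set 'I_n}) (r delta : nat -> nat)
    (i : nat) : nat := cdiv #|T i| (r i + delta i - 1).

(* Delta j = sum_{i < j} c_i (delta_i - 1)  (0-based: Delta j = paper's Delta_j) *)
Definition Delta (n : nat) (T : nat -> {set 'I_n}) (r delta : nat -> nat)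
    (j : nat) : nat := (\sum_(i < j) nblk T r delta i * (delta i - 1))%N.

Definition Rsum (n : nat) (T : nat -> {set 'I_n}) (r delta : nat -> nat)
    (j : nat) : nat := (\sum_(i < j) r i * nblk T r delta i)%N.

(* Main.v *)
From HB Require Import structures.
Require Import Defs.
From mathcomp Require Import all_boot all_order all_algebra.
From mathcomp Require Import zify.
Set Implicit Arguments. Unset Strict Implicit. Unset Printing Implicit Defensive.
Import GRing.Theory.

Lemma bigmin_le_seq (I : eqType) (r : seq I) (P : pred I) (Fn : I -> nat) c i0 :
  i0 \in r -> P i0 -> \big[minn/c]_(i <- r | P i) Fn i <= Fn i0.
Proof.
elim: r => [|y r IH] //; rewrite in_cons big_cons => /orP[/eqP <-|Hr] HP.
  by rewrite HP geq_minl.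
case: (P y); last exact: IH.
by rewrite geq_min IH ?orbT.
Qed.

Lemma bigmin_le (I : finType) (P : pred I) (Fn : I -> nat) c i0 :
  P i0 -> \big[minn/c]_(i | P i) Fn i <= Fn i0.
Proof. by move=> HP; apply: bigmin_le_seq => //; rewrite mem_index_enum. Qed.

Section Seqs.
Variables (F : finFieldType) (k n : nat) (G : 'M[F]_(k, n)).
Local Notation Pr := ('I_n * {set 'I_n})%type.

Definition Useq (s : seq Pr) : {set 'I_n} := \bigcup_(z <- s) z.2.

Fixpoint okacc (A : {set 'I_n}) (s : seq Pr) : bool :=
  if s is z :: s' then [&& regen G z.1 z.2, z.1 \notin A & okacc (A :|: z.2) s']
  else true.

Lemma Useq_nil : Useq [::] = set0.
Proof. by rewrite /Useq big_nil. Qed.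

Lemma Useq_cons z s : Useq (z :: s) = z.2 :|: Useq s.
Proof. by rewrite /Useq big_cons. Qed.

Lemma Useq_rcons s z : Useq (rcons s z) = Useq s :|: z.2.
Proof. by rewrite /Useq -cats1 big_cat big_seq1. Qed.

Lemma okaccP z0 A s : okacc A s <->
  (forall j, j < size s -> regen G (nth z0 s j).1 (nth z0 s j).2 /\
      (nth z0 s j).1 \notin A :|: Useq (take j s)).
Proof.
elim: s A => [|z s IH] A /=; first by split.
split.
- case/and3P => Hr HA /IH Hs [|j] /=.
    by move=> _; rewrite Useq_nil setU0.
  move=> Hj; have [H1 H2] := Hs j Hj; split => //.
  by rewrite Useq_cons setUA.
- move=> H; have [H1 H2] := H 0 isT; move: H2; rewrite Useq_nil setU0 => H2.
  rewrite H1 H2 /=; apply/IH => j Hj.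
  have [H3 H4] := H j.+1 Hj; split => //.
  by move: H4; rewrite /= Useq_cons setUA.
Qed.

Lemma bigcup_take (z0 : Pr) x (t : x.-tuple Pr) (j : nat) : j <= x ->
  \bigcup_(u < x | u < j) (tnth t u).2 = Useq (take j t).
Proof.
move=> Hj.
under eq_bigr => u _ do rewrite (tnth_nth z0).
rewrite -(big_ord_widen _ (fun u => (nth z0 t u).2) Hj).
rewrite /Useq (big_nth z0) size_take size_tuple.
have -> : (if j < x then j else x) = j by case: ltnP => //; lia.
rewrite big_mkord; apply: eq_bigr => u _; by rewrite nth_take.
Qed.

Lemma nontrivP x (t : x.-tuple Pr) : nontriv_union G t <-> okacc set0 t.
Proof.
case: x t => [|x] t.
  by rewrite (tuple0 t) /nontriv_union; split => // _; apply/forallP => -[].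
have z0 := tnth t ord0.
rewrite (okaccP z0); split.
- move=> /forallP H j Hj; have Hj' : j < x.+1 by rewrite -(size_tuple t).
  have /andP[H1 H2] := H (Ordinal (Hj' : j < x.+1)).
  move: H1 H2; rewrite (tnth_nth z0) /= => H1 H2; split => //.
  by rewrite set0U -(bigcup_take z0 t (ltnW Hj')).
- move=> H; apply/forallP => j; rewrite (tnth_nth z0).
  have [H1 H2] := H j ltac:(by rewrite size_tuple).
  by rewrite H1 /= (bigcup_take z0 t (ltnW (ltn_ord j))) -(set0U (Useq _)).
Qed.

Lemma seq_unionE x (t : x.-tuple Pr) : seq_union t = Useq t.
Proof.
rewrite /seq_union /Useq; case: x t => [|x] t.
  by rewrite (tuple0 t) big_ord0 big_nil.
have z0 := tnth t ord0.
rewrite (big_nth z0) size_tuple big_mkord.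
by apply: eq_bigr => u _; rewrite (tnth_nth z0).
Qed.

Lemma Phi_seq x (s : seq Pr) : okacc set0 s -> size s = x ->
  Phi_defined G x /\ (Phi G x <= #|Useq s|).
Proof.
move=> Hs Hx; subst x.
have Ht : nontriv_union G (in_tuple s) by apply/nontrivP.
split; first by apply/existsP; exists (in_tuple s).
have := bigmin_le (fun t => #|seq_union t|) n Ht; by rewrite seq_unionE.
Qed.

Lemma Phi_le_n x : Phi G x <= n.
Proof.
rewrite /Phi; elim/big_ind: _ => //.
  by move=> a b Ha Hb; rewrite geq_min Ha.
by move=> t _; apply: (leq_trans (max_card _)); rewrite card_ord.
Qed.

Lemma Phi_ge x c : c <= n ->
  (forall t : x.-tuple Pr, okacc set0 t -> c <= #|Useq t|) -> c <= Phi G x.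
Proof.
move=> Hc H; rewrite /Phi; elim/big_ind: _ => //.
  by move=> a b Ha Hb; rewrite leq_min Ha Hb.
move=> t /nontrivP Ht; rewrite seq_unionE; exact: H.
Qed.

Lemma okacc_rcons A s z : okacc A (rcons s z) =
  [&& okacc A s, regen G z.1 z.2 & z.1 \notin A :|: Useq s].
Proof.
elim: s A => [|y s IH] A /=; first by rewrite Useq_nil setU0 andbT.
rewrite IH Useq_cons setUA.
by case: (regen _ _ _); case: (y.1 \in A); case: (okacc _ _).
Qed.

Lemma okacc_take A s j : okacc A s -> okacc A (take j s).
Proof.
elim: s A j => [|y s IH] A [|j] //= /and3P[H1 H2 H3].
by rewrite H1 H2 IH.
Qed.

End Seqs.

Section Rank.
Variables (F : finFieldType) (k n : nat) (G : 'M[F]_(k, n)).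
Local Notation Pr := ('I_n * {set 'I_n})%type.

Definition V (S : {set 'I_n}) : 'M[F]_k := (\sum_(j in S) <<(trmx (col j G))>>)%MS.

Lemma col_V (S : {set 'I_n}) j : j \in S -> ((trmx (col j G)) <= V S)%MS.
Proof. by move=> Hj; apply: (sumsmx_sup j) => //; rewrite genmxE. Qed.

Lemma span_V (S : {set 'I_n}) i : in_span G S i -> ((trmx (col i G)) <= V S)%MS.
Proof.
case/existsP => c /eqP ->; rewrite linear_sum /=.
apply: summx_sub => j Hj; rewrite linearZ /=.
by apply: scalemx_sub; apply: col_V.
Qed.

Lemma V_mono (S S' : {set 'I_n}) : S \subset S' -> (V S <= V S')%MS.
Proof.
move=> /subsetP H; apply/sumsmx_subP => j Hj; rewrite genmxE.
by apply: col_V; apply: H.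
Qed.

Lemma rank_V (S : {set 'I_n}) : \rank (V S) <= #|S|.
Proof.
rewrite /V -sum1_card.
apply: (big_ind2 (fun (M : 'M[F]_k) c => \rank M <= c)).
- by rewrite mxrank0.
- move=> A1 c1 A2 c2 H1 H2; apply: leq_trans (leq_add H1 H2).
  exact: (mxrank_adds_leqif A1 A2).
- by move=> j _; rewrite mxrank_gen rank_leq_row.
Qed.

Definition Lset (s : seq Pr) : {set 'I_n} := [set x in map fst s].

Lemma okacc_disj A s : okacc G A s -> forall x, x \in map fst s -> x \notin A.
Proof.
elim: s A => [|[l R] s IH] A //=.
case/and3P => _ HA /IH H x; rewrite inE => /orP[/eqP ->//|/H].
by rewrite in_setU negb_or => /andP[].
Qed.

Lemma okacc_uniq A s : okacc G A s -> uniq (map fst s).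
Proof.
elim: s A => [|[l R] s IH] A //= /and3P[Hr _ Hs].
rewrite (IH _ Hs) andbT.
apply/negP => /(okacc_disj Hs); rewrite in_setU negb_or.
by case/and3P: Hr => -> _ _; rewrite andbF.
Qed.

Lemma okacc_span A s : okacc G A s -> forall i, ((trmx (col i G)) <= V (~: Lset s))%MS.
Proof.
elim: s A => [|[l R] s IH] A /=.
  by move=> _ i; apply: col_V; rewrite !inE.
case/and3P => Hr HA Hs i.
apply: submx_trans (IH _ Hs i) _.
apply/sumsmx_subP => j Hj; rewrite genmxE.
have Hd := okacc_disj Hs.
case: (eqVneq j l) => [->|Hjl].
  case/and3P: Hr => _ Hsp _; apply: submx_trans (span_V Hsp) _.
  apply: V_mono; apply/subsetP => x; rewrite !inE => /andP[Hxl HxR].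
  rewrite negb_or Hxl /=.
  by apply/negP => /Hd; rewrite in_setU HxR orbT.
apply: col_V; move: Hj; rewrite /Lset !inE negb_or Hjl.
by [].
Qed.

Lemma okacc_rank A s : okacc G A s -> \rank G <= n - size s.
Proof.
move=> Hs.
have H1 : ((trmx G) <= V (~: Lset s))%MS.
  by apply/row_subP => i; rewrite -tr_col; apply: okacc_span Hs i.
rewrite -mxrank_tr; apply: leq_trans (mxrankS H1) _.
apply: leq_trans (rank_V _) _.
rewrite cardsCs setCK card_ord /Lset cardsE.
have /card_uniqP -> := okacc_uniq Hs.
by rewrite size_map; lia.
Qed.
End Rank.

Lemma cardU_le (T : finType) (A B : {set T}) : #|A :|: B| <= #|A| + #|B|.
Proof. exact: (leq_card_setU A B).1. Qed.

Lemma subset_card (T : finType) (A : {set T}) m : m <= #|A| ->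
  exists E : {set T}, E \subset A /\ #|E| = m.
Proof.
move=> Hm; exists [set x in take m (enum A)]; split.
  by apply/subsetP => x; rewrite inE => /mem_take; rewrite mem_enum.
rewrite cardsE; have /card_uniqP -> := take_uniq m (enum_uniq (mem A)).
by rewrite size_takel // -cardE.
Qed.

Lemma subset_between (T : finType) (A S : {set T}) m :
  A \subset S -> #|A| <= m -> m <= #|S| ->
  exists E : {set T}, [/\ A \subset E, E \subset S & #|E| = m].
Proof.
move=> HAS H1 H2.
have [E0 [HE0 HcE0]] : exists E0 : {set T}, E0 \subset S :\: A /\ #|E0| = m - #|A|.
  by apply: subset_card; rewrite cardsDS //; lia.
exists (A :|: E0); split.
- exact: subsetUl.
- by rewrite subUset HAS (subset_trans HE0) // subsetDl.
- rewrite cardsU.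
  have -> : A :&: E0 = set0.
    apply/setP => x; rewrite !inE; apply/negP => /andP[Hx /(subsetP HE0)].
    by rewrite !inE Hx.
  rewrite cards0; lia.
Qed.

Lemma ar1 a b c u e : a <= b + c - 1 -> u + (a - (c - 1)) + e <= u + b + e.
Proof. lia. Qed.

Lemma ar2 a r : 0 < a -> 1 <= r -> 1 <= minn a r <= r.
Proof. lia. Qed.
Lemma ar3 d : 2 <= d -> 0 < d - 1.
Proof. lia. Qed.
Lemma ar4 d d' r : d <= d' -> minn (d - 1) r <= d' - 1.
Proof. lia. Qed.

Section Batch.
Variables (F : finFieldType) (k n : nat) (G : 'M[F]_(k, n)).
Local Notation Pr := ('I_n * {set 'I_n})%type.

Lemma batch_gen (s : seq Pr) (S E' E : {set 'I_n}) (L : seq 'I_n) :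
  okacc G set0 s -> E' \subset S ->
  (forall j, j \in E' -> regen G j ((S :\: E') :|: [set j])) ->
  E \subset E' -> (forall x, x \in E -> x \notin Useq s) ->
  uniq L -> {subset L <= E} ->
  let b := [seq (j, (S :\: E') :|: [set j]) | j <- L] in
  [/\ okacc G set0 (s ++ b), Useq s \subset Useq (s ++ b) &
      Useq (s ++ b) \subset Useq s :|: (S :\: E') :|: [set x in L]].
Proof.
move=> Hs HE'S Hreg HEE' HEU.
elim/last_ind: L => [|L j IH].
  by move=> _ _ /=; rewrite cats0 Hs subxx; split => //; rewrite -setUA subsetUl.
rewrite rcons_uniq => /andP[HjL HL] Hsub /=.
have HjE : j \in E by apply: Hsub; rewrite mem_rcons mem_head.
have {}IH := IH HL (fun x Hx => Hsub x ltac:(by rewrite mem_rcons in_cons Hx orbT)).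
case: IH => IH1 IH2 IH3.
rewrite map_rcons -rcons_cat okacc_rcons Useq_rcons IH1 /=.
have Hj' : j \in E' by apply: (subsetP HEE').
split.
- rewrite Hreg //= set0U; apply/negP => /(subsetP IH3).
  rewrite !inE (negbTE (HEU _ HjE)) Hj' /= (negbTE HjL) /=.
  by [].
- exact: subset_trans IH2 (subsetUl _ _).
- rewrite subUset; apply/andP; split.
    apply: subset_trans IH3 _; apply/subsetP => x; rewrite !inE.
    by case/orP => [->//|HxL]; rewrite mem_rcons in_cons HxL !orbT.
  apply/subsetP => x; rewrite !inE mem_rcons in_cons.
  by case/orP => [/andP[H1 H2]|H]; rewrite ?H1 ?H2 ?H ?orbT.
Qed.

Lemma batch (s : seq Pr) (S E' E : {set 'I_n}) :
  okacc G set0 s -> E' \subset S ->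
  (forall j, j \in E' -> regen G j ((S :\: E') :|: [set j])) ->
  E \subset E' -> (forall x, x \in E -> x \notin Useq s) ->
  exists b, [/\ size b = #|E|, okacc G set0 (s ++ b), Useq s \subset Useq (s ++ b) &
      Useq (s ++ b) \subset Useq s :|: (S :\: E') :|: E].
Proof.
move=> Hs HE'S Hreg HEE' HEU.
have [H1 H2 H3] := batch_gen (L := enum E) Hs HE'S Hreg HEE' HEU (enum_uniq _)
  (fun x => ltac:(by rewrite mem_enum)).
eexists; split; [|exact: H1|exact: H2|].
  by rewrite size_map cardE.
apply: subset_trans H3 _; apply/subsetP => x; rewrite !inE mem_enum.
by [].
Qed.

Definition lgroup (S : {set 'I_n}) (r' d' : nat) : Prop :=
  [/\ d' <= #|S|, #|S| <= r' + d' - 1 &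
      forall E : {set 'I_n}, E \subset S -> #|E| = d' - 1 ->
        forall j, j \in E -> regen G j ((S :\: E) :|: [set j])].

Lemma step (s : seq Pr) (S : {set 'I_n}) (r' d' d rem : nat) iota :
  okacc G set0 s -> iota \notin Useq s -> iota \in S -> lgroup S r' d' ->
  2 <= d -> d <= d' -> 1 <= rem ->
  exists b, [/\ 1 <= size b <= rem, okacc G set0 (s ++ b),
    Useq s \subset Useq (s ++ b), Useq (s ++ b) \subset Useq s :|: S &
    (#|Useq (s ++ b)| <= #|Useq s| + size b \/
     (#|Useq (s ++ b)| <= #|Useq s| + r' + size b /\ (size b = d - 1 \/ size b = rem)))].
Proof.
move=> Hs Hi HiS [Hd1 Hd2 Hreg] Hd Hdd Hrem.
set U := Useq s; set A := S :\: U.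
have HiA : iota \in A by rewrite !inE Hi HiS.
have HA0 : 0 < #|A| by apply/card_gt0P; exists iota.
have HAS : A \subset S by apply: subsetDl.
have HAU : forall x, x \in A -> x \notin U by move=> x; rewrite !inE => /andP[].
case: (leqP (d' - 1) #|A|) => HA.
- have [E' [HE'A HE'c]] := subset_card HA.
  have HE'S := subset_trans HE'A HAS.
  have [E [HEE' HEc]] : exists E : {set 'I_n}, E \subset E' /\ #|E| = minn (d - 1) rem.
    by apply: subset_card; rewrite HE'c; apply: ar4.
  have [b [Hb1 Hb2 Hb3 Hb4]] := batch Hs HE'S (Hreg E' HE'S HE'c) HEE'
    (fun x Hx => HAU x (subsetP HE'A x (subsetP HEE' x Hx))).
  exists b; split; [|exact: Hb2|exact: Hb3| |].
  + by rewrite Hb1 HEc; apply: ar2 => //; apply: ar3.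
  + apply: subset_trans Hb4 _; apply/subsetP => x; rewrite !inE -/U.
    case/orP => [/orP[H|/andP[_ H]]|H]; first by rewrite H.
      by rewrite H orbT.
    by rewrite (subsetP HE'S _ (subsetP HEE' _ H)) orbT.
  + right; split; last first.
      rewrite Hb1 HEc; case: (leqP (d - 1) rem) => Hm.
        by left.
      by right.
    apply: leq_trans (subset_leq_card Hb4) _.
    apply: leq_trans (cardU_le _ _) _.
    apply: leq_trans (leq_add (cardU_le _ _) (leqnn _)) _.
    rewrite cardsDS // HE'c Hb1 -/U; exact: ar1.
- have [E' [HAE' HE'S HE'c]] := subset_between HAS (ltnW HA) (leq_trans (leq_subr 1 d') Hd1).
  have [E [HEA HEc]] : exists E : {set 'I_n}, E \subset A /\ #|E| = minn #|A| rem.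
    by apply: subset_card; apply: geq_minl.
  have HEE' := subset_trans HEA HAE'.
  have [b [Hb1 Hb2 Hb3 Hb4]] := batch Hs HE'S (Hreg E' HE'S HE'c) HEE'
    (fun x Hx => HAU x (subsetP HEA x Hx)).
  have HSE'U : S :\: E' \subset U.
    apply/subsetP => x; rewrite inE => /andP[HxE' HxS].
    apply/negPn; apply/negP => HxU.
    by move: HxE'; rewrite (subsetP HAE') // !inE HxU HxS.
  have Hb4' : Useq (s ++ b) \subset U :|: E.
    apply/subsetP => x /(subsetP Hb4); rewrite !inE -/U.
    case/orP => [/orP[->//|Hx]|->]; last by rewrite orbT.
    by rewrite (subsetP HSE'U) // inE.
  exists b; split; [|exact: Hb2|exact: Hb3| |].
  + by rewrite Hb1 HEc; apply: ar2.
  + apply: subset_trans Hb4' _; apply/subsetP => x; rewrite !inE.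
    case/orP => [->//|/(subsetP HEA)]; rewrite !inE => /andP[_ ->].
    by rewrite orbT.
  + left; apply: leq_trans (subset_leq_card Hb4') _.
    by apply: leq_trans (cardU_le _ _) _; rewrite Hb1.
Qed.


End Batch.

Lemma cdiv_lt q y b : 0 < b -> q * b < y -> q.+1 <= cdiv y b.
Proof.
move=> Hb Hq; rewrite /cdiv leq_divRL // mulSn.
have : q * b + 1 <= y by lia.
lia.
Qed.

Lemma cdiv_le q y b : 0 < b -> q * b <= y -> q <= cdiv y b.
Proof.
move=> Hb Hq; rewrite /cdiv leq_divRL //; lia.
Qed.

Lemma cdiv_mono a a' b : a <= a' -> cdiv a b <= cdiv a' b.
Proof. by move=> H; rewrite /cdiv leq_div2r // leq_add2r. Qed.

Lemma cdiv_mul c b : 0 < b -> cdiv (c * b) b = c.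
Proof.
move=> Hb; rewrite /cdiv; apply/eqP; rewrite eqn_leq; apply/andP; split.
  rewrite -ltnS ltn_divLR // mulSn; lia.
by rewrite leq_divRL //; lia.
Qed.

Lemma h1 y y' e m : y - y' <= m.+1 -> 1 <= e -> y - (y' + e) <= m.
Proof. lia. Qed.
Lemma h2 y y' e : y' <= y -> e <= y - y' -> y' + e <= y.
Proof. lia. Qed.
Lemma h3 a u e u0 y X : a <= u + e -> u <= u0 + y + X -> a <= u0 + (y + e) + X.
Proof. lia. Qed.
Lemma h4 a u r e u0 y X R : a <= u + r + e -> u <= u0 + y + X -> r <= R ->
  a <= u0 + (y + e) + (R + X).
Proof. lia. Qed.
Lemma h5 (a y e : nat) : a <= y -> e + a <= y + e.
Proof. lia. Qed.
Lemma h6 a u r e u0 y' X R Z y : a <= u + r + e -> u <= u0 + y' + X -> r <= R ->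
  R + X <= Z -> e = y - y' -> y' < y -> a <= u0 + y + Z.
Proof. lia. Qed.

Section Loop.
Variables (F : finFieldType) (k n : nat) (G : 'M[F]_(k, n)).
Local Notation Pr := ('I_n * {set 'I_n})%type.

Lemma loop (s0 : seq Pr) (Reg : {set 'I_n}) (R d y : nat) :
  okacc G set0 s0 -> 2 <= d ->
  (forall iota, iota \in Reg -> exists (S : {set 'I_n}) (r' d' : nat),
      [/\ S \subset Reg, iota \in S, lgroup G S r' d', r' <= R & d <= d']) ->
  (forall y' (U : {set 'I_n}), y' < y -> Useq s0 \subset U ->
      U \subset Useq s0 :|: Reg ->
      #|U| <= #|Useq s0| + y' + R * cdiv y' (d - 1) ->
      exists2 iota, iota \in Reg & iota \notin U) ->
  exists s, [/\ size s = size s0 + y, okacc G set0 s, Useq s0 \subset Useq s,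
     Useq s \subset Useq s0 :|: Reg &
     #|Useq s| <= #|Useq s0| + y + R * cdiv y (d - 1)].
Proof.
move=> Hs0 Hd Hgrp Hroom.
have Hd1 : 0 < d - 1 by lia.
set U0 := Useq s0.
suff H : forall m y' q s, y - y' <= m -> y' <= y ->
    [/\ size s = size s0 + y', okacc G set0 s, U0 \subset Useq s,
        Useq s \subset U0 :|: Reg & q * (d - 1) <= y'] ->
    #|Useq s| <= #|U0| + y' + R * q ->
    exists s, [/\ size s = size s0 + y, okacc G set0 s, U0 \subset Useq s,
     Useq s \subset U0 :|: Reg &
     #|Useq s| <= #|U0| + y + R * cdiv y (d - 1)].
  apply: (H (y - 0) 0 0 s0) => //; first by split; rewrite ?addn0 ?subsetUl.
  by rewrite muln0 !addn0.
elim=> [|m IH] y' q s Hm Hy [Hsz Hok HU0 HUreg Hq] Hc;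
  (case: (ltnP y' y) => Hyy; last first);
  [ | by exfalso; lia | | ].
- have Hyy' : y = y' by lia.
  subst y; exists s; split => //.
  apply: leq_trans Hc _; rewrite leq_add2l leq_mul2l; apply/orP; right.
  exact: cdiv_le.
- have Hyy' : y = y' by lia.
  subst y; exists s; split => //.
  apply: leq_trans Hc _; rewrite leq_add2l leq_mul2l; apply/orP; right.
  exact: cdiv_le.
  have Hq' : q <= cdiv y' (d - 1) by apply: cdiv_le.
  have [iota Hi HiU] : exists2 iota, iota \in Reg & iota \notin Useq s.
    apply: (Hroom y') => //.
    apply: leq_trans Hc _; rewrite leq_add2l leq_mul2l Hq' orbT //.
  have [S [r' [d' [HSR HiS Hg Hr' Hdd]]]] := Hgrp iota Hi.
  have Hrem : 1 <= y - y' by rewrite subn_gt0.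
  have [b [Hb1 Hb2 Hb3 Hb4 Hb5]] := step Hok HiU HiS Hg Hd Hdd Hrem.
  have Hinv1 : U0 \subset Useq (s ++ b) := subset_trans HU0 Hb3.
  have Hinv2 : Useq (s ++ b) \subset U0 :|: Reg.
    apply/subsetP => x /(subsetP Hb4); rewrite in_setU => /orP[/(subsetP HUreg)//|Hx].
    by rewrite in_setU (subsetP HSR x Hx) orbT.
  have Hsz' : size (s ++ b) = size s0 + (y' + size b) by rewrite size_cat Hsz addnA.
  case/andP: Hb1 => Hb1 Hb1'.
  have Hm' : y - (y' + size b) <= m := h1 Hm Hb1.
  have Hy' : y' + size b <= y := h2 Hy Hb1'.
  case: Hb5 => [Hfree|[Hcost [He|He]]].
  + apply: (IH (y' + size b) q (s ++ b)) => //.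
      by split => //; apply: leq_trans Hq (leq_addr _ _).
    exact: h3 Hfree Hc.
  + apply: (IH (y' + size b) q.+1 (s ++ b)) => //.
      by split => //; rewrite mulSn He; apply: h5 Hq.
    by rewrite mulnS; apply: h4 Hcost Hc Hr'.
  + exists (s ++ b); split => //.
      by rewrite Hsz' He subnKC // ltnW.
    have Hq2 : q.+1 <= cdiv y (d - 1) by apply: cdiv_lt => //; apply: leq_ltn_trans Hq Hyy.
    have HRq : R * q.+1 <= R * cdiv y (d - 1) by rewrite leq_mul2l Hq2 orbT.
    rewrite mulnS in HRq.
    exact: h6 Hcost Hc Hr' HRq He Hyy.
Qed.
End Loop.

Lemma h7 t u u0 y' A B X : t <= u - u0 -> u <= u0 + y' + A -> A <= B ->
  B + (X - 1) < t -> y' < X -> False.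
Proof. lia. Qed.
Lemma h8 a u Y Z Rs D : a <= u + Y + Z -> u <= Rs + D -> a <= (Rs + Z) + (D + Y).
Proof. lia. Qed.
Lemma h9 D x Y : x <= D + Y -> x - D <= Y.
Proof. lia. Qed.
Lemma h10 a u x D Z Rs : a <= u + (x - D) + Z -> u <= Rs + D -> D <= x ->
  a <= Rs + Z + x.
Proof. lia. Qed.
Lemma h11 (k n t : nat) : 1 <= k -> k <= n - t -> t <= n.
Proof. lia. Qed.
Lemma h12 (k n m p : nat) : k <= n - m -> n <= p -> p - m < k -> False.
Proof. lia. Qed.
Lemma h13 (x m : nat) : x <= m -> x <> m -> x <= m.-1.
Proof. lia. Qed.
Lemma h14 (x r m : nat) : x <= r.+1 -> r <= m.-1 -> 1 <= m -> x <= m.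
Proof. lia. Qed.
Lemma h15 (u n B : nat) : n <= u -> u <= B -> B < n -> False.
Proof. lia. Qed.
Lemma h16 (i s : nat) : i < s -> i <= s.-1.
Proof. lia. Qed.
Lemma h17 (s : nat) : 2 <= s -> s.-1 < s.
Proof. lia. Qed.
Lemma h18 (a : nat) : 2 <= a -> 0 < a - 1.
Proof. lia. Qed.
Lemma h19 (D x : nat) : D <= x -> D + (x - D) = x.
Proof. lia. Qed.
Lemma h20 (D Y : nat) : D + Y - D - 1 = Y - 1.
Proof. lia. Qed.

Unset Implicit Arguments.
Theorem lemma2 (F : finFieldType) (k n : nat) (G : 'M[F]_(k, n))
  (s : nat) (T : nat -> {set 'I_n}) (r delta : nat -> nat) :
  (2 <= s)%N ->
  \rank G = k ->
  is_partition s T ->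
  (forall i j, (i <= j)%N -> (j < s)%N -> (r i <= r j)%N /\ (delta j <= delta i)%N) ->
  (forall i, (i < s)%N -> (2 <= delta i)%N) ->
  multi_locality G s T r delta ->
  (Rsum T r delta s.-1 + 1 <= k)%N ->
  (forall j, (j.+1 < s)%N ->
     let D := (Delta T r delta j.+1 - Delta T r delta j - 1)%N in
     (r j * cdiv D (delta j - 1) + D < #|T j|)%N) ->
  (forall j x, (j.+1 < s)%N ->
     (Delta T r delta j <= x <= Delta T r delta j.+1)%N ->
     Phi_defined G x /\
     (Phi G x <= Rsum T r delta j
                 + r j * cdiv (x - Delta T r delta j) (delta j - 1) + x)%N) /\
  (forall x,
     (Delta T r delta s.-1 <= x <= (rho G).+1)%N ->
     Phi_defined G x /\
     (Phi G x <= Rsum T r delta s.-1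
                 + r s.-1 * cdiv (x - Delta T r delta s.-1) (delta s.-1 - 1) + x)%N).
Proof.
move=> Hs2 Hrk [Hcov Hdisj Hne] Hmono Hdel Hloc HRk Hroomj.
have Hgrp : forall i, i < s -> forall iota, iota \in T i ->
   exists S : {set 'I_n}, [/\ S \subset T i, iota \in S & lgroup G S (r i) (delta i)].
  move=> i Hi iota Hio; have [S [H1 H2 H3 H4 H5]] := Hloc i Hi iota Hio.
  by exists S; split => //; split.
have Hreg : forall iota : 'I_n, exists R, regen G iota R.
  move=> iota; have [i Hi Hio] := Hcov iota.
  have [S [HST HiS [Hd1 Hd2 Hr]]] := Hgrp i Hi iota Hio.
  have Hdi := Hdel i Hi.
  have [E [H1 H2 H3]] := @subset_between _ [set iota] S (delta i - 1)
    ltac:(by rewrite sub1set) ltac:(by rewrite cards1; apply: h18)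
    (leq_trans (leq_subr 1 _) Hd1).
  exists ((S :\: E) :|: [set iota]); apply: (Hr E H2 H3).
  by rewrite -sub1set.
have DeltaS : forall j, Delta T r delta j.+1 =
    Delta T r delta j + nblk T r delta j * (delta j - 1).
  by move=> j; rewrite /Delta big_ord_recr.
have RsumS : forall j, Rsum T r delta j.+1 = Rsum T r delta j + r j * nblk T r delta j.
  by move=> j; rewrite /Rsum big_ord_recr.
have Hblk : forall j, j.+1 < s -> forall s0 : seq ('I_n * {set 'I_n}),
    okacc G set0 s0 -> Useq s0 \subset \bigcup_(i < j) T i ->
    forall y, y <= nblk T r delta j * (delta j - 1) ->
    exists s', [/\ size s' = size s0 + y, okacc G set0 s',
       Useq s' \subset Useq s0 :|: T j &
       #|Useq s'| <= #|Useq s0| + y + r j * cdiv y (delta j - 1)].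
  move=> j Hj s0 Hs0 HU0 y Hy.
  have Hjs : j < s by apply: ltnW.
  have Hg : forall iota, iota \in T j -> exists (S : {set 'I_n}) (r' d' : nat),
      [/\ S \subset T j, iota \in S, lgroup G S r' d', r' <= r j & delta j <= d'].
    move=> iota Hio; have [S [H1 H2 H3]] := Hgrp j Hjs iota Hio.
    by exists S, (r j), (delta j); split.
  have Hrm : forall y' (U : {set 'I_n}), y' < y -> Useq s0 \subset U ->
      U \subset Useq s0 :|: T j ->
      #|U| <= #|Useq s0| + y' + r j * cdiv y' (delta j - 1) ->
      exists2 iota, iota \in T j & iota \notin U.
    move=> y' U Hy' HU0U _ HUc.
    case: (pickP (fun x => (x \in T j) && (x \notin U))) => [x /andP[Hx1 Hx2]|Hnone].
      by exists x.
    exfalso.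
    have HTU : T j \subset U :\: Useq s0.
      apply/subsetP => x Hx; rewrite in_setD.
      have := Hnone x; rewrite Hx /= => /negbFE ->; rewrite andbT.
      apply/negP => /(subsetP HU0) /bigcupP [i _ Hi].
      have Hij : (i : nat) <> j by move=> E; move: (ltn_ord i); rewrite E ltnn.
      have := Hdisj i j (leq_trans (ltn_ord i) (ltnW Hjs)) Hjs Hij.
      by move=> /disjointFr /(_ Hi); rewrite Hx.
    have Ht := subset_leq_card HTU; rewrite cardsDS // in Ht.
    have HR := Hroomj j Hj; cbv zeta in HR; rewrite DeltaS h20 in HR.
    apply: (h7 Ht HUc _ HR (leq_trans Hy' Hy)).
    rewrite leq_mul2l; apply/orP; right; apply: cdiv_mono.
    move: Hy' Hy; clear; lia.
  have [s' [H1 H2 _ H4 H5]] := loop Hs0 (Hdel j Hjs) Hg Hrm.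
  by exists s'; split.
have Hstate : forall j, j < s -> exists s0 : seq ('I_n * {set 'I_n}),
    [/\ size s0 = Delta T r delta j, okacc G set0 s0,
        Useq s0 \subset \bigcup_(i < j) T i &
        #|Useq s0| <= Rsum T r delta j + Delta T r delta j].
  elim => [|j IH] Hj.
    exists [::]; split => //.
    - by rewrite /Delta big_ord0.
    - by rewrite Useq_nil sub0set.
    - by rewrite Useq_nil cards0.
  have [s0 [H1 H2 H3 H4]] := IH (ltnW Hj).
  have [s' [H1' H2' H3' H4']] := Hblk j Hj s0 H2 H3 _ (leqnn _).
  exists s'; split => //.
  - by rewrite H1' H1 DeltaS.
  - apply/subsetP => x /(subsetP H3'); rewrite in_setU => /orP[/(subsetP H3)|Hx].
      by case/bigcupP => i _ Hi; apply/bigcupP; exists (widen_ord (leqnSn j) i).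
    by apply/bigcupP; exists ord_max.
  - rewrite cdiv_mul in H4'; last by apply: h18; apply: Hdel; apply: ltnW.
    rewrite RsumS DeltaS; exact: h8 H4' H4.
have HPdef : forall x, x <= (rho G).+1 -> Phi_defined G x.
  have Hex : exists t, Phi_defined G t.
    by exists 0; have [] := @Phi_seq _ _ _ G 0 [::] isT erefl.
  have Hk1 : 1 <= k by move: HRk; clear; lia.
  have Hub : forall t, Phi_defined G t -> t <= n.
    move=> t /existsP [tup /nontrivP Htup].
    have := okacc_rank Htup; rewrite Hrk size_tuple; exact: h11.
  case: (ex_maxnP Hex Hub) => m Hm Hmax.
  have Hall : forall tup : m.-tuple ('I_n * {set 'I_n}),
      okacc G set0 tup -> Useq tup = setT.
    move=> tup Htup; apply/eqP; rewrite eqEsubset subsetT /=.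
    apply/subsetP => iota _; apply/negPn/negP => Hio.
    have [R HR] := Hreg iota.
    have Hok : okacc G set0 (rcons tup (iota, R)) by rewrite okacc_rcons Htup HR set0U Hio.
    have [Hd _] := Phi_seq Hok (erefl _).
    have := Hmax _ Hd; rewrite size_rcons size_tuple ltnn; by [].
  have HPm : n <= Phi G m.
    apply: Phi_ge => // tup Htup; by rewrite Hall // cardsT card_ord.
  have Hkm : k <= n - m.
    move: Hm => /existsP [tup /nontrivP Htup].
    by have := okacc_rank Htup; rewrite Hrk size_tuple.
  have Hm1 : 1 <= m.
    have Hs0 : 0 < s by apply: leq_trans Hs2.
    have [iota Hio] := set0Pn _ (Hne 0 Hs0).
    have [R HR] := Hreg iota.
    have Hok : okacc G set0 [:: (iota, R)] by rewrite /= HR inE.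
    have [Hd _] := Phi_seq Hok (erefl _).
    exact: Hmax _ Hd.
  have Hrho : rho G <= m.-1.
    apply/bigmax_leqP => x /andP[Hdx Hlt].
    apply: h13; first exact: Hmax _ Hdx.
    move=> Hxm; rewrite Hxm in Hlt; exact: h12 Hkm HPm Hlt.
  move=> x Hx; have Hxm := h14 Hx Hrho Hm1.
  move: Hm => /existsP [tup /nontrivP Htup].
  have Hok := okacc_take x Htup.
  have Hsz : size (take x tup) = x by rewrite size_takel // size_tuple.
  have [Hd _] := Phi_seq Hok Hsz.
  exact: Hd.
split.
- move=> j x Hj /andP[Hx1 Hx2].
  have [s0 [H1 H2 H3 H4]] := Hstate j (ltnW Hj).
  have Hy : x - Delta T r delta j <= nblk T r delta j * (delta j - 1).
    by apply: h9; rewrite -DeltaS.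
  have [s' [H1' H2' _ H4']] := Hblk j Hj s0 H2 H3 _ Hy.
  have Hsz : size s' = x by rewrite H1' H1 h19.
  have [Hdef HPhi] := Phi_seq H2' Hsz.
  split => //; apply: leq_trans HPhi _.
  exact: h10 H4' H4 Hx1.
- move=> x /andP[Hx1 Hx2].
  have Hs1 := h17 Hs2.
  have [s0 [H1 H2 H3 H4]] := Hstate s.-1 Hs1.
  split; first exact: HPdef.
  set y := x - Delta T r delta s.-1.
  case: (leqP n (#|Useq s0| + y + r s.-1 * cdiv y (delta s.-1 - 1))) => HB.
    apply: leq_trans (Phi_le_n _ _) _; apply: leq_trans HB _.
    exact: h10 (leqnn _) H4 Hx1.
  have Hg : forall iota, iota \in [set: 'I_n] -> exists (S : {set 'I_n}) (r' d' : nat),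
      [/\ S \subset [set: 'I_n], iota \in S, lgroup G S r' d', r' <= r s.-1 & delta s.-1 <= d'].
    move=> iota _; have [i Hi Hio] := Hcov iota.
    have [S [HST HiS Hg]] := Hgrp i Hi iota Hio.
    have [Hr Hd] := Hmono i s.-1 (h16 Hi) Hs1.
    by exists S, (r i), (delta i); split => //; apply: subsetT.
  have Hrm : forall y' (U : {set 'I_n}), y' < y -> Useq s0 \subset U ->
      U \subset Useq s0 :|: [set: 'I_n] ->
      #|U| <= #|Useq s0| + y' + r s.-1 * cdiv y' (delta s.-1 - 1) ->
      exists2 iota, iota \in [set: 'I_n] & iota \notin U.
    move=> y' U Hy' _ _ HUc.
    case: (pickP (fun x => x \notin U)) => [z Hz|Hnone].
      by exists z; rewrite ?inE.
    exfalso.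
    have HTU : [set: 'I_n] \subset U.
      by apply/subsetP => z _; have := Hnone z; move/negbFE.
    have := subset_leq_card HTU; rewrite cardsT card_ord => Hn.
    apply: (h15 Hn _ HB); apply: leq_trans HUc _.
    apply: leq_add; first by rewrite leq_add2l; apply: ltnW.
    by rewrite leq_mul2l cdiv_mono ?orbT // ltnW.
  have [s' [H1' H2' _ _ H4']] := loop H2 (Hdel _ Hs1) Hg Hrm.
  have Hsz : size s' = x by rewrite H1' H1 h19.
  have [_ HPhi] := Phi_seq H2' Hsz.
  apply: leq_trans HPhi _; exact: h10 H4' H4 Hx1.
Qed.
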